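(* Let $A$ be a graded Poisson algebra with a conjugation $\rho$, let $*$ be a nondegenerate short star-product on $A$, $\mathbf{A}=(A,* )$ the corresponding quantization, $g$ and $T$ the corresponding automorphism and nondegenerate $g$-twisted trace, and regard $\rho$ as an antilinear map $\mathbf{A}\to\mathbf{A}$ (as $\mathbf{A}=A$ as filtered vector spaces). Then: (i) $*$ is conjugation-invariant if and only if $\rho$ is a conjugation on $\mathbf{A}$ (an antilinear algebra automorphism) which conjugates $T$, i.e., $T(\rho(\mathbf{a}))=\overline{T(\mathbf{a})}$ (hence $\rho$ commutes with $g$); (ii) in this situation, $*$ is Hermitian if and only if in addition $\rho^2=g$.
   Context: $A=\bigoplus_{d\ge0}A_d$ commutative graded with $A_0=\mathbb{C}$, $\dim A_d<\infty$, Poisson bracket of degree $-2$; $s=(-1)^d$. Conjugation on $A$: $\mathbb{C}$-antilinear degree-preserving Poisson automorphism; conjugation on a quantization: antilinear filtration-preserving algebra automorphism commuting with $s$. Star-product $a*b=\sum_kC_k(a,b)$ ($C_k$ degree $-2k$, $C_0$ product, $C_1(a,b)-C_1(b,a)=\{a,b\}$); short: $C_k(a,b)=0$ for $k>\min(\deg a,\deg b)$; nondegenerate: $\langle a,b\rangle=\mathrm{CT}(a*b)$ nondegenerate on each $A_i$. $T(\mathbf{a})=\mathrm{CT}(\mathbf{a})$ on $(A,* )$, and $g$ is the unique filtration-preserving automorphism with $T(\mathbf{a}*\mathbf{b})=T(\mathbf{b}*g(\mathbf{a}))$. Conjugation-invariant: $\rho(a*b)=\rho(a)*\rho(b)$.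 A conjugation-invariant short star-product is Hermitian if $\mathrm{CT}(a*b)=\mathrm{CT}(b*\rho^2(a))$. *)

(* Defs.v *)
From HB Require Import structures.
From mathcomp Require Import all_boot all_algebra.
From mathcomp Require Export complex reals.
Set Implicit Arguments.
Unset Strict Implicit.
Unset Printing Implicit Defensive.
Import GRing.Theory Num.Theory.
Local Open Scope ring_scope.

Section GradedPoisson.
Variable R : realType.
Local Notation C := R[i].
Variable A : comAlgType C.
(* [pi d] is the projection of A = (+)_d A_d onto the summand A_d. *)
Variable pi : nat -> A -> A.

Definition homog (d : nat) (x : A) : Prop := pi d x = x.

Definition in_filt (n : nat) (x : A) : Prop := forall d, (n < d)%N -> pi d x = 0.

Definition filt_preserving (f : A -> A) : Prop :=
  forall n x, in_filt n x -> in_filt n (f x).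

Definition C_linear (f : A -> A) : Prop :=
  forall (c : C) x y, f (c *: x + y) = c *: f x + f y.

Definition C_antilinear (f : A -> A) : Prop :=
  forall (c : C) x y, f (c *: x + y) = c^* *: f x + f y.

Definition C_bilinear (B : A -> A -> A) : Prop :=
  (forall y, C_linear (fun x => B x y)) /\ (forall x, C_linear (B x)).

Definition of_degree_minus (m : nat) (B : A -> A -> A) : Prop :=
  forall d e x y, homog d x -> homog e y ->
    ((m <= d + e)%N -> homog (d + e - m) (B x y)) /\
    ((d + e < m)%N -> B x y = 0).

Record graded_algebra : Prop := {
  pi_linear : forall d, C_linear (pi d);
  pi_proj : forall d e x, pi d (pi e x) = if d == e then pi e x else 0;
  pi_decomp : forall x, exists N : nat,
      (forall d, (N <= d)%N -> pi d x = 0) /\ x = \sum_(d < N) pi d x;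
  pi_mul : forall d e x y, homog d x -> homog e y -> homog (d + e) (x * y);
  pi_one : homog 0 1;
  A0_scalar : forall x, homog 0 x -> exists c : C, x = c *: 1;
  Ad_findim : forall d, exists s : seq A,
      forall x, homog d x -> exists c : nat -> C,
        x = \sum_(i < size s) c i *: s`_i
}.

Record poisson_bracket (br : A -> A -> A) : Prop := {
  br_bilinear : C_bilinear br;
  br_antisym : forall x y, br x y = - br y x;
  br_jacobi : forall x y z, br x (br y z) + br y (br z x) + br z (br x y) = 0;
  br_leibniz : forall x y z, br x (y * z) = br x y * z + y * br x z;
  br_degree : of_degree_minus 2 br
}.

Definition graded_poisson (br : A -> A -> A) : Prop :=
  graded_algebra /\ poisson_bracket br.

Record poisson_conjugation (br : A -> A -> A) (rho : A -> A) : Prop := {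
  conj_antilinear : C_antilinear rho;
  conj_bij : bijective rho;
  conj_degree : forall d x, rho (pi d x) = pi d (rho x);
  conj_mul : forall x y, rho (x * y) = rho x * rho y;
  conj_one : rho 1 = 1;
  conj_br : forall x y, rho (br x y) = br (rho x) (rho y)
}.

Record star_product (br : A -> A -> A) (Ck : nat -> A -> A -> A)
    (star : A -> A -> A) : Prop := {
  Ck_bilinear : forall k, C_bilinear (Ck k);
  Ck_degree : forall k, of_degree_minus (2 * k) (Ck k);
  C0_mul : forall x y, Ck 0%N x y = x * y;
  C1_br : forall x y, Ck 1%N x y - Ck 1%N y x = br x y;
  star_sum : forall x y, exists N : nat,
      (forall k, (N <= k)%N -> Ck k x y = 0) /\ star x y = \sum_(k < N) Ck k x y;
  star_assoc : forall x y z, star x (star y z) = star (star x y) z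
}.

Definition short (Ck : nat -> A -> A -> A) : Prop :=
  forall k d e x y, homog d x -> homog e y -> (minn d e < k)%N -> Ck k x y = 0.

(* T = CT is the constant term: the A_0 = C component *)
Definition constant_term (T : A -> C) : Prop := forall x, pi 0 x = T x *: 1.

Definition nondegenerate_star (star : A -> A -> A) (T : A -> C) : Prop :=
  forall i x, homog i x ->
    ((forall y, homog i y -> T (star x y) = 0) -> x = 0) /\
    ((forall y, homog i y -> T (star y x) = 0) -> x = 0).

Definition parity_op (s : A -> A) : Prop :=
  C_linear s /\ forall d x, homog d x -> s x = (-1) ^+ d *: x.

Record twist_automorphism (star : A -> A -> A) (T : A -> C) (g : A -> A) : Prop := {
  g_linear : C_linear g;
  g_bij : bijective g;
  g_filt : filt_preserving g;
  g_mul : forall x y, g (star x y) = star (g x) (g y);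
  g_one : g 1 = 1;
  g_twist : forall x y, T (star x y) = T (star y (g x))
}.

Record quant_conjugation (s : A -> A) (star : A -> A -> A) (rho : A -> A) : Prop := {
  qconj_antilinear : C_antilinear rho;
  qconj_bij : bijective rho;
  qconj_filt : filt_preserving rho;
  qconj_mul : forall x y, rho (star x y) = star (rho x) (rho y);
  qconj_one : rho 1 = 1;
  qconj_s : forall x, rho (s x) = s (rho x)
}.

Definition conj_invariant (star : A -> A -> A) (rho : A -> A) : Prop :=
  forall x y, rho (star x y) = star (rho x) (rho y).

Definition hermitian_star (star : A -> A -> A) (T : A -> C) (rho : A -> A) : Prop :=
  conj_invariant star rho /\
  forall x y, T (star x y) = T (star y (rho (rho x))).

End GradedPoisson.

(* Main.v *)
Require Import Defs.
From HB Require Import structures.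
From mathcomp Require Import all_boot all_algebra.
From mathcomp Require Import complex reals.
From mathcomp Require Import zify ring.
Import GRing.Theory Num.Theory.
Local Open Scope ring_scope.

Lemma idem0 (V : zmodType) (v : V) : v = v + v -> v = 0.
Proof. by move=> E; rewrite -(addrK v v) -E subrr. Qed.

Lemma lin0 {R : realType} {A : comAlgType R[i]} {f : A -> A} :
  C_linear f -> f 0 = 0.
Proof.
move=> H; have := H 1 0 0; rewrite !scale1r addr0 ; move=> E; apply: (@addrI _ (f 0)); by rewrite addr0 -E.
Qed.

Lemma linD {R : realType} {A : comAlgType R[i]} {f : A -> A} :
  C_linear f -> forall x y, f (x + y) = f x + f y.
Proof. by move=> H x y; have := H 1 x y; rewrite !scale1r. Qed.

Lemma linZ {R : realType} {A : comAlgType R[i]} {f : A -> A} :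
  C_linear f -> forall c x, f (c *: x) = c *: f x.
Proof. by move=> H c x; rewrite -[c *: x]addr0 H (lin0 H) addr0. Qed.

Lemma linB {R : realType} {A : comAlgType R[i]} {f : A -> A} :
  C_linear f -> forall x y, f (x - y) = f x - f y.
Proof. by move=> H x y; rewrite -scaleN1r addrC H scaleN1r addrC. Qed.

Lemma lin_sum {R : realType} {A : comAlgType R[i]} {f : A -> A} :
  C_linear f -> forall n (F : 'I_n -> A), f (\sum_(i < n) F i) = \sum_(i < n) f (F i).
Proof. move=> H n F; apply: (big_morph f (linD H) (lin0 H)). Qed.

Lemma alin0 {R : realType} {A : comAlgType R[i]} {f : A -> A} :
  C_antilinear f -> f 0 = 0.
Proof.
move=> H; have := H 1 0 0; rewrite !scale1r addr0 conjC1 !scale1r => E; apply: (@addrI _ (f 0)); by rewrite addr0 -E.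
Qed.

Lemma alinD {R : realType} {A : comAlgType R[i]} {f : A -> A} :
  C_antilinear f -> forall x y, f (x + y) = f x + f y.
Proof. by move=> H x y; rewrite -[x]scale1r H conjC1 !scale1r. Qed.

Lemma alinZ {R : realType} {A : comAlgType R[i]} {f : A -> A} :
  C_antilinear f -> forall c x, f (c *: x) = c^* *: f x.
Proof. by move=> H c x; rewrite -[c *: x]addr0 H (alin0 H) addr0. Qed.

Lemma alin_sum {R : realType} {A : comAlgType R[i]} {f : A -> A} :
  C_antilinear f -> forall n (F : 'I_n -> A), f (\sum_(i < n) F i) = \sum_(i < n) f (F i).
Proof. move=> H n F; apply: (big_morph f (alinD H) (alin0 H)). Qed.

Lemma scale1_inj {R : realType} {A : comAlgType R[i]} (a b : R[i]) :
  a *: (1 : A) = b *: 1 -> a = b.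
Proof.
move=> /eqP; rewrite -subr_eq0 -scalerBl scaler_eq0 (negbTE (oner_neq0 _)) orbF subr_eq0.
by move/eqP.
Qed.

Lemma T_lin {R : realType} {A : comAlgType R[i]} { pi : nat -> A -> A } {T : A -> R[i]} :
  graded_algebra pi -> constant_term pi T ->
  forall c x y, T (c *: x + y) = c * T x + T y.
Proof.
move=> G HT c x y; apply: (@scale1_inj R A).
by rewrite -HT (pi_linear G) !HT scalerDl scalerA.
Qed.

Lemma T0 {R : realType} {A : comAlgType R[i]} { pi : nat -> A -> A } {T : A -> R[i]} :
  graded_algebra pi -> constant_term pi T -> T 0 = 0.
Proof.
move=> G HT; have := T_lin G HT 1 0 0; rewrite !scale1r addr0 mul1r => E; apply: (@addrI _ (T 0)); by rewrite addr0 -E.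
Qed.

Lemma TD {R : realType} {A : comAlgType R[i]} { pi : nat -> A -> A } {T : A -> R[i]} :
  graded_algebra pi -> constant_term pi T -> forall x y, T (x + y) = T x + T y.
Proof. by move=> G HT x y; rewrite -[x]scale1r (T_lin G HT) scale1r mul1r. Qed.

Lemma TB {R : realType} {A : comAlgType R[i]} { pi : nat -> A -> A } {T : A -> R[i]} :
  graded_algebra pi -> constant_term pi T -> forall x y, T (x - y) = T x - T y.
Proof.
move=> G HT x y; rewrite -scaleN1r addrC (T_lin G HT) addrC; ring.
Qed.

Lemma T_sum {R : realType} {A : comAlgType R[i]} { pi : nat -> A -> A } {T : A -> R[i]} :
  graded_algebra pi -> constant_term pi T ->
  forall n (F : 'I_n -> A), T (\sum_(i < n) F i) = \sum_(i < n) T (F i).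
Proof. move=> G HT n F; apply: (big_morph T (TD G HT) (T0 G HT)). Qed.

Lemma pi_homog {R : realType} {A : comAlgType R[i]} { pi : nat -> A -> A } :
  graded_algebra pi -> forall d (x : A), homog pi d (pi d x).
Proof. by move=> G d x; rewrite /homog (pi_proj G) eqxx. Qed.

Lemma sum_eq_ext {V : zmodType} (F : nat -> V) N M :
  (forall k, (N <= k)%N -> F k = 0) -> (forall k, (M <= k)%N -> F k = 0) ->
  \sum_(k < N) F k = \sum_(k < M) F k.
Proof.
wlog NM : N M / (N <= M)%N.
  move=> W HN HM; case: (leqP N M) => h; first exact: W.
  by symmetry; apply: W => //; apply: ltnW.
move=> HN _.
rewrite -!(big_mkord xpredT) (big_cat_nat (leq0n N) NM) /= [X in _ = _ + X]big1_seq ?addr0 //.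
by move=> k /andP[_]; rewrite mem_index_iota => /andP[h _]; apply: HN.
Qed.

Lemma Ck_high {R : realType} {A : comAlgType R[i]} { pi : nat -> A -> A } {br Ck star} :
  graded_algebra pi -> star_product pi br Ck star -> short pi Ck ->
  forall {i k y w}, homog pi i y -> (i < k)%N -> Ck k y w = 0.
Proof.
move=> G SP Sh i k y w Hy Hk.
case: (pi_decomp G w) => N [_ Hw].
rewrite Hw (lin_sum ((Ck_bilinear SP k).2 y)); apply: big1 => d _.
apply: (Sh k i d) => //; first exact: pi_homog.
exact: leq_ltn_trans (geq_minl i d) Hk.
Qed.

Lemma star_fin {R : realType} {A : comAlgType R[i]} { pi : nat -> A -> A } {br Ck star} :
  graded_algebra pi -> star_product pi br Ck star -> short pi Ck ->
  forall {i y w}, homog pi i y -> star y w = \sum_(k < i.+1) Ck k y w.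
Proof.
move=> G SP Sh i y w Hy.
case: (star_sum SP y w) => N [HN ->].
apply: (sum_eq_ext (fun k => Ck k y w)) => // k Hk; exact: (Ck_high G SP Sh Hy).
Qed.

Lemma starB {R : realType} {A : comAlgType R[i]} { pi : nat -> A -> A } {br Ck star} :
  graded_algebra pi -> star_product pi br Ck star -> short pi Ck ->
  forall {i y u v}, homog pi i y -> star y (u - v) = star y u - star y v.
Proof.
move=> G SP Sh i y u v Hy.
rewrite !(star_fin G SP Sh Hy) -sumrB; apply: eq_bigr => k _.
exact: (linB ((Ck_bilinear SP k).2 y)).
Qed.

Lemma cross {R : realType} {A : comAlgType R[i]} { pi : nat -> A -> A } {br Ck star T} :
  graded_algebra pi -> star_product pi br Ck star -> short pi Ck ->
  constant_term pi T ->
  forall {i j k y w}, homog pi i y -> homog pi j w -> i != j -> T (Ck k y w) = 0.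
Proof.
move=> G SP Sh HT i j k y w Hy Hw ij.
have [H1 H2] := Ck_degree SP k Hy Hw.
case: (ltnP (i + j) (2 * k)) => h; first by rewrite H2 // (T0 G HT).
have Hh := H1 h.
apply: (@scale1_inj R A); rewrite -HT scale0r -Hh (pi_proj G).
case: eqP => // E0; rewrite Hh; apply: (Sh k i j) => //.
move: ij => /eqP ij; lia.
Qed.

Lemma T_star_proj {R : realType} {A : comAlgType R[i]} { pi : nat -> A -> A } {br Ck star T} :
  graded_algebra pi -> star_product pi br Ck star -> short pi Ck ->
  constant_term pi T ->
  forall {i y z}, homog pi i y -> T (star y z) = T (star y (pi i z)).
Proof.
move=> G SP Sh HT i y z Hy.
rewrite !(star_fin G SP Sh Hy) !(T_sum G HT); apply: eq_bigr => k _.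
case: (pi_decomp G z) => M [HM Hz].
have iM : (i < maxn M i.+1)%N by rewrite leq_max leqnn orbT.
have Hz' : z = \sum_(d < maxn M i.+1) pi d z.
  rewrite {1}Hz; apply: (sum_eq_ext (fun d => pi d z)) => // d Hd; apply: HM.
  exact: leq_trans (leq_maxl M i.+1) Hd.
rewrite {1}Hz' (lin_sum ((Ck_bilinear SP k).2 y)) (T_sum G HT).
rewrite (bigD1 (Ordinal iM)) //= big1 ?addr0 // => d /= dne.
apply: (cross G SP Sh HT Hy (pi_homog G d z)).
by apply/eqP => E; move: dne; apply/negP; rewrite negbK; apply/eqP/val_inj.
Qed.

Lemma nondeg0 {R : realType} {A : comAlgType R[i]} { pi : nat -> A -> A } {br Ck star T} :
  graded_algebra pi -> star_product pi br Ck star -> short pi Ck ->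
  constant_term pi T -> nondegenerate_star pi star T ->
  forall z, (forall i y, homog pi i y -> T (star y z) = 0) -> z = 0.
Proof.
move=> G SP Sh HT ND z H.
have Hi : forall i, pi i z = 0.
  move=> i; apply: (ND i (pi i z) (pi_homog G i z)).2 => y Hy.
  by rewrite -(T_star_proj G SP Sh HT Hy); apply: H Hy.
case: (pi_decomp G z) => N [_ Hz]; rewrite Hz; apply: big1 => d _; exact: Hi.
Qed.

Theorem lemma3p23 (R : realType) (A : comAlgType R[i]) (pi : nat -> A -> A)
  (br : A -> A -> A) (rho : A -> A) (Ck : nat -> A -> A -> A)
  (star : A -> A -> A) (T : A -> R[i]) (g : A -> A) (s : A -> A) :
  graded_poisson pi br ->
  poisson_conjugation pi br rho ->
  star_product pi br Ck star ->
  short pi Ck ->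
  constant_term pi T ->
  nondegenerate_star pi star T ->
  twist_automorphism pi star T g ->
  parity_op pi s ->
  (conj_invariant star rho <->
     (quant_conjugation pi s star rho /\ forall x, T (rho x) = (T x)^*)) /\
  (conj_invariant star rho -> forall x, rho (g x) = g (rho x)) /\
  (conj_invariant star rho -> (hermitian_star star T rho <-> forall x, rho (rho x) = g x)).
Proof.
move=> [G PB] PC SP Sh HT ND TW Ps.
have AL := conj_antilinear PC.
have Trho : forall x, T (rho x) = (T x)^*.
  move=> x; apply: (@scale1_inj R A).
  by rewrite -HT -(conj_degree PC) HT (alinZ AL) (conj_one PC).
have qc : conj_invariant star rho -> quant_conjugation pi s star rho.
  move=> CI; split.
  - exact: AL.
  - exact: conj_bij PC.
  - by move=> n x Hx d Hd; rewrite -(conj_degree PC) Hx // (alin0 AL).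
  - exact: CI.
  - exact: conj_one PC.
  - move=> x; case: (pi_decomp G x) => N [_ Hx].
    have Hrx : rho x = \sum_(d < N) pi d (rho x).
      rewrite {1}Hx (alin_sum AL); apply: eq_bigr => d _; exact: (conj_degree PC).
    rewrite Hrx {1}Hx (lin_sum Ps.1) (alin_sum AL) (lin_sum Ps.1).
    apply: eq_bigr => d _.
    rewrite (Ps.2 d _ (pi_homog G d x)) (alinZ AL) rmorphXn rmorphN1.
    by rewrite (conj_degree PC) (Ps.2 d _ (pi_homog G d (rho x))).
have nd := nondeg0 G SP Sh HT ND.
have sB := starB G SP Sh.
split; last split.
- split; first by move=> CI; split; [exact: qc | exact: Trho].
  by case=> Q _; exact: (qconj_mul Q).
- move=> CI x.
  suff: rho (g x) - g (rho x) = 0 by move/eqP; rewrite subr_eq0 => /eqP.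
  apply: nd => i y Hy.
  have [b Eb] : exists b, y = rho b.
    case: (conj_bij PC) => rinv K1 K2; exists (rinv y); by rewrite K2.
  rewrite (sB _ _ _ _ Hy) (TB G HT); apply/eqP; rewrite subr_eq0; apply/eqP.
  rewrite Eb -(g_twist TW) -CI Trho -CI Trho.
  by rewrite (g_twist TW x b).
- move=> CI; split.
  + case=> _ Hh x.
    suff: rho (rho x) - g x = 0 by move/eqP; rewrite subr_eq0 => /eqP.
    apply: nd => i y Hy.
    by rewrite (sB _ _ _ _ Hy) (TB G HT) -Hh -(g_twist TW) subrr.
  + move=> H; split => // x y; rewrite H; exact: (g_twist TW).
Qed.
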